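(* Let $G$ be a trigraph containing two disjoint vertical sets $V^j=\{x^j,y^j\}\cup V(F^j)$ and $V^{j'}=\{x^{j'},y^{j'}\}\cup V(F^{j'})$ with an arc from $V^j$ to $V^{j'}$, where both fence gadgets $F^j$ and $F^{j'}$ satisfy the attachment rule in $G$. Then in any partial $4$-sequence from $G$, any contraction involving two vertices of $V^{j'}$ is preceded by (or is itself) the contraction that puts $x^j$ and $y^j$ into the same part.
   Context: A trigraph $G$ consists of a vertex set $V(G)$ and two disjoint sets of unordered pairs of distinct vertices: black edges and red edges; the red graph is formed by the red edges. Contracting two distinct vertices $u,v$ replaces them by a new vertex $w$ such that, for every other vertex $z$, $wz$ is black if $uz,vz$ are both black, a non-edge if both are non-edges, and red otherwise. A partial $d$-sequence from $G$ is a sequence of trigraphs starting at $G$, each obtained from the previous by one contraction, all of maximum red degree at most $d$. Each vertex $u$ of a later trigraph corresponds to the set $u(G)$ (its part) of vertices of $G$ merged into it; a contraction of $u,u'$ involves two vertices $v,v'$ of $G$ if $v\in u(G),v'\in u'(G)$ or vice versa. A fence gadget is a trigraph $F$ on $A\cup B$, $A=\{a_1,\dots,a_6\}$, $B=\{b_1,\dots,b_6\}$, whose black edges are those of the cycles $a_1a_2a_3a_4a_5a_6a_1$ and $b_1b_2b_3b_4b_5b_6b_1$ together with $b_1a_6$, and whose red edges are $a_ib_i$ for $i\in[6]$ and $a_ib_{i+1}$ for $i\in[5]$. Inside a trigraph $G$, $F$ is attached to a nonempty set $S\subseteq V(G)\setminus V(F)$ if every vertex of $A$ is joined by a black edge to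 every vertex of $S$ and no vertex of $B$ is adjacent to a vertex of $S$. $F$ satisfies the attachment rule in $G$ if $V(F)$ is the vertex set of a connected component of the red graph of $G$ and there is a set $X\subseteq V(G)\setminus(V(F)\cup S)$ such that every vertex of $A$ has exactly $X\cup S$ as its set of neighbours outside $V(F)$, every vertex of $B$ has exactly $X$ as its set of neighbours outside $V(F)$ (all these edges black), and every vertex of $X$ is adjacent to every vertex of $S$. A vertical set is a set $\{x,y\}\cup V(F)$ where $F$ is a fence gadget attached to $\{x,y\}$; $\{x,y\}$ is its vertical pair. An arc from a vertical set $V^j$ to a vertical set $V^{j'}$ means that $x^{j'}$ is joined by black edges to every vertex of $V^j$ while $y^{j'}$ has no neighbour in $V^j$. *)

(* Defs.v *)
From mathcomp Require Import all_boot.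
Set Implicit Arguments. Unset Strict Implicit. Unset Printing Implicit Defensive.

Record trigraph (T : finType) := Trigraph {
  tver : {set T}; tblack : rel T; tred : rel T }.

Section Defs.
Variable T : finType.

Definition wf_trigraph (G : trigraph T) : Prop :=
  [/\ forall u v, tblack G u v -> [/\ u \in tver G, v \in tver G & u != v],
      forall u v, tred G u v -> [/\ u \in tver G, v \in tver G & u != v],
      forall u v, tblack G u v = tblack G v u,
      forall u v, tred G u v = tred G v u &
      forall u v, ~~ (tblack G u v && tred G u v)].

Definition adj (G : trigraph T) u v := tblack G u v || tred G u v.

Definition rdeg (G : trigraph T) u := #|[set v in tver G | tred G u v]|.
Definition maxrdeg_le (d : nat) (G : trigraph T) : Prop :=
  forall u, u \in tver G -> rdeg G u <= d.
End Defs.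

(* Trigraphs of a contraction sequence from G: each vertex is identified with
   its part (a set of vertices of G). *)
Section Contraction.
Variable T : finType.

Definition trig_lift (G : trigraph T) : trigraph {set T} :=
  Trigraph [set [set v] | v in tver G]
    (fun A B => [exists u, exists v, [&& A == [set u], B == [set v] & tblack G u v]])
    (fun A B => [exists u, exists v, [&& A == [set u], B == [set v] & tred G u v]]).

Definition contract (H : trigraph {set T}) (A B : {set T}) : trigraph {set T} :=
  let W := A :|: B in
  let V' := tver H :\ A :\ B in
  let nb Z := [&& Z \in V', tblack H A Z & tblack H B Z] in
  let nr Z := [&& Z \in V', adj H A Z || adj H B Z & ~~ (tblack H A Z && tblack H B Z)] in
  Trigraph (W |: V')
    (fun X Y => if X == W then nb Y else if Y == W then nb X
                else [&& X \in V', Y \in V' & tblack H X Y])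
    (fun X Y => if X == W then nr Y else if Y == W then nr X
                else [&& X \in V', Y \in V' & tred H X Y]).

Definition trig_after (G : trigraph T) (s : seq ({set T} * {set T})) (k : nat) :=
  foldl (fun H p => contract H p.1 p.2) (trig_lift G) (take k s).

Definition nthc (s : seq ({set T} * {set T})) i := nth (set0, set0) s i.

(* s is (the list of contracted pairs of) a partial d-sequence from G. *)
Definition partial_seq (d : nat) (G : trigraph T) (s : seq ({set T} * {set T})) : Prop :=
  (forall k, k < size s ->
     [/\ (nthc s k).1 \in tver (trig_after G s k),
         (nthc s k).2 \in tver (trig_after G s k) &
         (nthc s k).1 != (nthc s k).2]) /\
  (forall k, k <= size s -> maxrdeg_le d (trig_after G s k)).

Definition involves (p : {set T} * {set T}) (v v' : T) : bool :=
  ((v \in p.1) && (v' \in p.2)) || ((v \in p.2) && (v' \in p.1)).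
End Contraction.

(* Fence gadgets. A vertex label (false, i) stands for a_(i+1), (true, i) for b_(i+1). *)
Definition cyc6 (i j : 'I_6) : bool := ((i.+1 %% 6) == j) || ((j.+1 %% 6) == i).

Definition fence_black (p q : bool * 'I_6) : bool :=
  [|| [&& ~~ p.1, ~~ q.1 & cyc6 p.2 q.2],
      [&& p.1, q.1 & cyc6 p.2 q.2],
      [&& p.1, p.2 == 0 :> nat, ~~ q.1 & q.2 == 5 :> nat] |
      [&& ~~ p.1, p.2 == 5 :> nat, q.1 & q.2 == 0 :> nat]].

Definition fence_red (p q : bool * 'I_6) : bool :=
  [&& ~~ p.1, q.1 & (q.2 == p.2 :> nat) || (q.2 == p.2.+1 :> nat)] ||
  [&& p.1, ~~ q.1 & (p.2 == q.2 :> nat) || (p.2 == q.2.+1 :> nat)].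

Unset Implicit Arguments.
Section Fence.
Variable T : finType.
Variable G : trigraph T.

Definition VF (f : bool * 'I_6 -> T) : {set T} := [set f p | p in [set: bool * 'I_6]].
Definition FA (f : bool * 'I_6 -> T) : {set T} := [set f (false, i) | i in [set: 'I_6]].
Definition FB (f : bool * 'I_6 -> T) : {set T} := [set f (true, i) | i in [set: 'I_6]].

(* f embeds a fence gadget as an induced subtrigraph of G. *)
Definition is_fence (f : bool * 'I_6 -> T) : Prop :=
  [/\ injective f, forall p, f p \in tver G,
      forall p q, tblack G (f p) (f q) = fence_black p q &
      forall p q, tred G (f p) (f q) = fence_red p q].

Definition attached (f : bool * 'I_6 -> T) (S : {set T}) : Prop :=
  [/\ S != set0, S \subset tver G :\: VF f,
      forall a s, a \in FA f -> s \in S -> tblack G a s &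
      forall b s, b \in FB f -> s \in S -> ~~ adj G b s].

Definition attachment_rule (f : bool * 'I_6 -> T) (S : {set T}) : Prop :=
  (forall u v, u \in VF f -> (v \in VF f) = connect (tred G) u v) /\
  exists X : {set T},
    [/\ X \subset tver G :\: (VF f :|: S),
        forall a z, a \in FA f -> z \notin VF f ->
          tblack G a z = (z \in X :|: S) /\ ~~ tred G a z,
        forall b z, b \in FB f -> z \notin VF f ->
          tblack G b z = (z \in X) /\ ~~ tred G b z &
        forall z s, z \in X -> s \in S -> adj G z s].

Definition vset (x y : T) (f : bool * 'I_6 -> T) : {set T} := [set x; y] :|: VF f.

Definition vertical (x y : T) (f : bool * 'I_6 -> T) : Prop :=
  [/\ x != y, is_fence f & attached f [set x; y]].

Definition vs_arc (Vj : {set T}) (x' y' : T) : Prop :=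
  (forall v, v \in Vj -> tblack G x' v) /\ (forall v, v \in Vj -> ~~ adj G y' v).
End Fence.
Arguments VF {T}. Arguments FA {T}. Arguments FB {T}. Arguments is_fence {T}.
Arguments attached {T}. Arguments attachment_rule {T}. Arguments vset {T}.
Arguments vertical {T}. Arguments vs_arc {T}.

(* Main.v *)
Require Import Defs.
From mathcomp Require Import all_boot.
Set Implicit Arguments. Unset Strict Implicit. Unset Printing Implicit Defensive.

Definition inv (T : finType) (G : trigraph T) (H : trigraph {set T}) : Prop :=
 [/\ forall v, v \in tver G -> exists2 P, P \in tver H & v \in P,
     forall P Q v, P \in tver H -> Q \in tver H -> v \in P -> v \in Q -> P = Q,
     forall P Q p q, tblack H P Q -> p \in P -> q \in Q -> tblack G p q &
     forall P Q p q, P \in tver H -> Q \in tver H -> P != Q -> p \in P -> q \in Q ->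
        adj G p q -> adj H P Q].

Lemma inv_lift (T : finType) (G : trigraph T) : wf_trigraph G -> inv G (trig_lift G).
Proof.
move=> [bE rE bS rS bR]; split.
- move=> v vG; exists [set v]; [exact: imset_f | exact: set11].
- by move=> P Q v /imsetP[a _ ->] /imsetP[b _ ->]; rewrite !inE => /eqP-> /eqP->.
- by move=> P Q p q /existsP[a /existsP[b /and3P[/eqP-> /eqP-> hab]]]; rewrite !inE => /eqP-> /eqP->.
- move=> P Q p q /imsetP[a _ ->] /imsetP[b _ ->] _; rewrite !inE => /eqP-> /eqP->.
  rewrite /adj /= => /orP[h|h]; apply/orP; [left|right]; apply/existsP; exists a;
  apply/existsP; exists b; by rewrite !eqxx h.
Qed.

Lemma inv_contract (T : finType) (G : trigraph T) (H : trigraph {set T}) A B :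
  wf_trigraph G -> inv G H -> A \in tver H -> B \in tver H -> A != B ->
  inv G (contract H A B).
Proof.
move=> [_ _ bS rS _] [cov uni blk adjI] HA HB AB.
have adjS : forall p q, adj G p q = adj G q p by move=> p q; rewrite /adj bS rS.
have inV : forall P, (P \in tver (contract H A B)) = (P == A :|: B) || [&& P != B, P != A & P \in tver H].
  by move=> P; rewrite /contract /= !inE.
split.
- move=> v vG; case: (boolP (v \in A :|: B)) => vW.
    by exists (A :|: B) => //; rewrite inV eqxx.
  have [P HP vP] := cov v vG; exists P => //; rewrite inV; apply/orP; right.
  rewrite HP andbT; apply/andP; split; apply/eqP => E; move: vW; rewrite inE -E vP ?orbT //.
- move=> P Q v; rewrite !inV.
  move=> /orP[/eqP->|/and3P[PB PA HP]] /orP[/eqP->|/and3P[QB QA HQ]] //.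
  + rewrite inE => /orP[vA|vB] vQ.
      by move: QA; rewrite (uni _ _ _ HA HQ vA vQ) eqxx.
    by move: QB; rewrite (uni _ _ _ HB HQ vB vQ) eqxx.
  + move=> vP; rewrite inE => /orP[vA|vB].
      by move: PA; rewrite (uni _ _ _ HA HP vA vP) eqxx.
    by move: PB; rewrite (uni _ _ _ HB HP vB vP) eqxx.
  + exact: uni.
- move=> P Q p q; rewrite /contract /=.
  case: ifP => [/eqP-> /and3P[_ bA bB]|_].
    by rewrite inE => /orP[pA|pB] qQ; [apply: blk bA pA qQ | apply: blk bB pB qQ].
  case: ifP => [/eqP-> /and3P[_ bA bB]|_]; last first.
    by move=> /and3P[_ _ b]; apply: blk.
  move=> pP; rewrite inE => /orP[qA|qB]; rewrite bS; [apply: blk bA qA pP | apply: blk bB qB pP].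
- move=> P Q p q HP HQ PQ pP qQ apq.
  rewrite /adj /contract /=.
  have inV' : forall R, R \in tver (contract H A B) -> R != A :|: B -> [&& R != B, R != A & R \in tver H].
    by move=> R; rewrite inV => /orP[->|].
  case: ifP => [/eqP EP|nEP].
    have QW : Q != A :|: B by rewrite -EP eq_sym.
    have /and3P[QB QA HQ'] := inV' _ HQ QW.
    rewrite !inE QB QA HQ' /=.
    case hb: (tblack H A Q && tblack H B Q) => //=; rewrite andbT.
    move: pP; rewrite EP inE => /orP[pA|pB].
      by rewrite (adjI _ _ _ _ HA HQ' (negbT (introF eqP (fun e => (negP QA) (introT eqP (esym e))))) pA qQ apq).
    by rewrite (adjI _ _ _ _ HB HQ' (negbT (introF eqP (fun e => (negP QB) (introT eqP (esym e))))) pB qQ apq) orbT.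
  have /and3P[PB PA HP'] := inV' _ HP (negbT nEP).
  case: ifP => [/eqP EQ|nEQ].
    rewrite !inE PB PA HP' /=.
    case hb: (tblack H A P && tblack H B P) => //=; rewrite andbT.
    rewrite adjS in apq.
    move: qQ; rewrite EQ inE => /orP[qA|qB].
      by rewrite (adjI _ _ _ _ HA HP' (negbT (introF eqP (fun e => (negP PA) (introT eqP (esym e))))) qA pP apq).
    by rewrite (adjI _ _ _ _ HB HP' (negbT (introF eqP (fun e => (negP PB) (introT eqP (esym e))))) qB pP apq) orbT.
  have /and3P[QB QA HQ'] := inV' _ HQ (negbT nEQ).
  rewrite !inE PB PA HP' QB QA HQ' /=.
  exact: (adjI _ _ _ _ HP' HQ' PQ pP qQ apq).
Qed.

Lemma trig_after_S (T : finType) (G : trigraph T) s k : k < size s ->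
  trig_after G s k.+1 = contract (trig_after G s k) (nthc s k).1 (nthc s k).2.
Proof. by move=> ks; rewrite /trig_after (take_nth (set0, set0) ks) -cats1 foldl_cat. Qed.

Lemma inv_after (T : finType) (G : trigraph T) d s k :
  wf_trigraph G -> partial_seq d G s -> k <= size s -> inv G (trig_after G s k).
Proof.
move=> wf [ps _]; elim: k => [|k IH] ks; first by rewrite /trig_after take0; exact: inv_lift.
have ks' : k < size s by [].
rewrite trig_after_S //; have [h1 h2 h3] := ps k ks'.
apply: inv_contract => //; exact: IH (ltnW ks).
Qed.

Lemma same_part (T : finType) (G : trigraph T) d s k :
  wf_trigraph G -> partial_seq d G s -> k <= size s ->
  forall P u v, P \in tver (trig_after G s k) -> u \in P -> v \in P ->
  u = v \/ exists2 j, j < k & involves (nthc s j) u v.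
Proof.
move=> wf ps; elim: k => [|k IH] ks P u v.
  by rewrite /trig_after take0 => /imsetP[a _ ->]; rewrite !inE => /eqP-> /eqP->; left.
have ks' : k < size s by [].
have [HA HB _] := ps.1 k ks'.
have IH' : forall P u v, P \in tver (trig_after G s k) -> u \in P -> v \in P ->
  u = v \/ exists2 j, j < k.+1 & involves (nthc s j) u v.
  move=> Q a b HQ aQ bQ; case: (IH (ltnW ks) Q a b HQ aQ bQ) => [->|[j jk hj]]; [by left|right].
  by exists j => //; apply: ltnW.
rewrite trig_after_S // /contract /= !inE => /orP[/eqP->|/and3P[_ _ HP]]; last exact: IH'.
rewrite !inE => /orP[uA|uB] /orP[vA|vB].
- exact: IH' HA uA vA.
- by right; exists k => //; rewrite /involves uA vB.
- by right; exists k => //; rewrite /involves uB vA orbT.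
- exact: IH' HB uB vB.
Qed.

Definition distinct_parts (T : finType) (H : trigraph {set T}) (U : {set T}) :=
  forall P w1 w2, P \in tver H -> w1 \in U -> w2 \in U -> w1 \in P -> w2 \in P -> w1 = w2.

Lemma distinct_after (T : finType) (G : trigraph T) d s k (U : {set T}) :
  wf_trigraph G -> partial_seq d G s -> k <= size s ->
  (forall j v v', j < k -> v \in U -> v' \in U -> ~~ involves (nthc s j) v v') ->
  distinct_parts (trig_after G s k) U.
Proof.
move=> wf ps ks nb P w1 w2 HP h1 h2 p1 p2.
case: (same_part wf ps ks HP p1 p2) => // [[j jk hj]].
by move: (nb j w1 w2 jk h1 h2); rewrite hj.
Qed.

Definition mixed (T : finType) (G : trigraph T) u u' w :=
  (adj G u w || adj G u' w) && ~~ (tblack G u w && tblack G u' w).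

Lemma red_bound (T : finType) (G : trigraph T) s k u u' (Ws : {set T}) :
  wf_trigraph G -> partial_seq 4 G s -> k < size s ->
  u \in (nthc s k).1 -> u' \in (nthc s k).2 -> Ws \subset tver G ->
  distinct_parts (trig_after G s k) Ws ->
  (forall w, w \in Ws -> [&& w \notin (nthc s k).1, w \notin (nthc s k).2 & mixed G u u' w]) ->
  #|Ws| <= 4.
Proof.
move=> wf ps ks uA uB WG dp hw.
have [HA HB AB] := ps.1 k ks.
have [cov uni blk adjI] := inv_after wf ps (ltnW ks).
set H := trig_after G s k in HA HB AB cov uni blk adjI dp.
set A := (nthc s k).1 in uA HA AB hw; set B := (nthc s k).2 in uB HB AB hw.
have md := ps.2 k.+1 ks.
rewrite trig_after_S // -/H -/A -/B in md.
have := md (A :|: B); rewrite /contract /= !inE eqxx => /(_ isT) rd.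
apply: leq_trans rd.
pose part w := odflt set0 [pick P in tver H | w \in P].
have partP : forall w, w \in Ws -> part w \in tver H /\ w \in part w.
  move=> w wW; rewrite /part; case: pickP => [P /andP[]//|none].
  have [P HP wP] := cov w (subsetP WG w wW).
  by move: (none P); rewrite HP wP.
rewrite -(card_in_imset (f := part)); last first.
  move=> w1 w2 h1 h2 e; have [p1 q1] := partP _ h1; have [p2 q2] := partP _ h2.
  by apply: (dp (part w1)) => //; rewrite e.
apply: subset_leq_card; apply/subsetP => R /imsetP[w wW ->].
have [Hp wp] := partP _ wW.
have /and3P[wA wB mx] := hw w wW.
have pA : part w != A by apply/eqP => e; move: wA; rewrite -e wp.
have pB : part w != B by apply/eqP => e; move: wB; rewrite -e wp.
rewrite /contract /= !inE eqxx pA pB Hp /=.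
move: mx => /andP[ad nb]; apply/andP; split; first by rewrite orbT.
apply/andP; split; last first.
  apply/negP => /andP[b1 b2]; move/negP: nb; apply; apply/andP; split; [exact: blk b1 uA wp| exact: blk b2 uB wp].
case/orP: ad => [a1|a2].
- by rewrite (adjI _ _ _ _ HA Hp (negbT (introF eqP (fun e => (negP pA) (introT eqP (esym e))))) uA wp a1).
- by rewrite (adjI _ _ _ _ HB Hp (negbT (introF eqP (fun e => (negP pB) (introT eqP (esym e))))) uB wp a2) orbT.
Qed.

Definition L := ((bool * 'I_6) + bool)%type.
Definition lblack (bx : bool) (l l' : L) : bool :=
  match l, l' with
  | inl p, inl q => fence_black p q
  | inl p, inr _ => ~~ p.1
  | inr _, inl q => ~~ q.1
  | inr b, inr b' => (b != b') && bx end.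
Definition lred (rx : bool) (l l' : L) : bool :=
  match l, l' with
  | inl p, inl q => fence_red p q
  | inr b, inr b' => (b != b') && rx
  | _, _ => false end.
Definition lmixed bx rx (l1 l2 w : L) :=
  ((lblack bx l1 w || lred rx l1 w) || (lblack bx l2 w || lred rx l2 w)) && ~~ (lblack bx l1 w && lblack bx l2 w).
Definition isS (l : L) := if l is inr _ then true else false.
Definition o0 : 'I_6 := Ordinal (isT : 0 < 6).
Definition o1 : 'I_6 := Ordinal (isT : 1 < 6).
Definition o2 : 'I_6 := Ordinal (isT : 2 < 6).
Definition o3 : 'I_6 := Ordinal (isT : 3 < 6).
Definition o4 : 'I_6 := Ordinal (isT : 4 < 6).
Definition o5 : 'I_6 := Ordinal (isT : 5 < 6).
Definition os := [:: o0; o1; o2; o3; o4; o5].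
Definition allL : seq L := [seq inl (false, i) | i <- os] ++ [seq inl (true, i) | i <- os] ++ [:: inr false; inr true].
Definition leqb (l l' : L) : bool :=
  match l, l' with
  | inl p, inl q => (p.1 == q.1) && (val p.2 == val q.2)
  | inr b, inr b' => b == b'
  | _, _ => false end.
Definition goodP bx rx l1 l2 w := ~~ leqb w l1 && ~~ leqb w l2 && lmixed bx rx l1 l2 w.
Lemma comb bx rx : all (fun l1 => all (fun l2 => (~~ leqb l1 l2 && ~~ (isS l1 && isS l2)) ==>
   (5 <= count (goodP bx rx l1 l2) allL)) allL) allL.
Proof. by case: bx; case: rx; vm_compute; reflexivity. Qed.

Lemma leqbE l l' : leqb l l' = (l == l').
Proof.
case: l => [[b i]|b]; case: l' => [[b' i']|b'] //=.
Qed.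

Lemma allL_all l : l \in allL.
Proof.
have ho : forall i : 'I_6, i \in os.
  by case=> [[|[|[|[|[|[|n]]]]]] hn] //.
case: l => [[[] i]|[]]; rewrite /allL !mem_cat ?(map_f _ (ho i)) ?orbT //.
Qed.

Lemma uniq_allL : uniq allL.
Proof. by []. Qed.

Lemma size_allL : size allL = 14.
Proof. by []. Qed.

Definition lab (T : finType) (x y : T) (f : bool * 'I_6 -> T) (l : L) : T :=
  match l with inl p => f p | inr b => if b then y else x end.

Lemma lab_facts (T : finType) (G : trigraph T) x y f :
  wf_trigraph G -> vertical G x y f ->
  [/\ forall l l', tblack G (lab x y f l) (lab x y f l') = lblack (tblack G x y) l l',
      forall l l', tred G (lab x y f l) (lab x y f l') = lred (tred G x y) l l',
      injective (lab x y f),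
      forall l, lab x y f l \in tver G &
      forall v, v \in vset x y f -> exists l, v = lab x y f l].
Proof.
move=> [bE rE bS rS bR] [xy [finj fG fb fr] [_ Ssub Ablk Bnadj]].
have xS : x \in [set x; y] by rewrite !inE eqxx.
have yS : y \in [set x; y] by rewrite !inE eqxx orbT.
have xG := subsetP Ssub x xS; have yG := subsetP Ssub y yS.
move: xG yG; rewrite !inE => /andP[xF xG] /andP[yF yG].
have irr : forall u, tblack G u u = false.
  by move=> u; apply/negP => /bE[_ _]; rewrite eqxx.
have irrR : forall u, tred G u u = false.
  by move=> u; apply/negP => /rE[_ _]; rewrite eqxx.
have fS : forall (p : bool * 'I_6) (b : bool),
   tblack G (f p) (if b then y else x) = ~~ p.1 /\ tred G (f p) (if b then y else x) = false.
  move=> [[] i] b /=.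
    have bF : f (true, i) \in FB f by rewrite /FB; apply: imset_f; rewrite inE.
    have sS : (if b then y else x) \in [set x; y] by case: b.
    have := Bnadj _ _ bF sS.
    by rewrite /adj negb_or => /andP[/negbTE-> /negbTE->].
  have hb := Ablk (f (false, i)) (if b then y else x).
  have aF : f (false, i) \in FA f by rewrite /FA; apply: imset_f; rewrite inE.
  have sS : (if b then y else x) \in [set x; y] by clear hb; case: b.
  have hb' := hb aF sS.
  by rewrite hb'; split=> //; apply/negbTE; move: (bR (f (false,i)) (if b then y else x)); rewrite hb'.
split.
- case=> [p|b] [q|b'] /=; first by rewrite fb.
  + by have [] := fS p b'.
  + by rewrite bS; have [] := fS q b.
  + by case: b; case: b' => //=; rewrite ?irr // bS.
- case=> [p|b] [q|b'] /=; first by rewrite fr.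
  + by have [] := fS p b'.
  + by rewrite rS; have [] := fS q b.
  + by case: b; case: b' => //=; rewrite ?irrR // rS.
- have nF : forall p, f p != x /\ f p != y.
    move=> p; split; apply/eqP => e.
      by move: xF; rewrite -e /VF imset_f.
    by move: yF; rewrite -e /VF imset_f.
  case=> [p|[]] [q|[]] //=.
  + by move=> /finj ->.
  + by move=> e; have [_] := nF p; rewrite e eqxx.
  + by move=> e; have [] := nF p; rewrite e eqxx.
  + by move=> e; have [_] := nF q; rewrite e eqxx.
  + by move=> e; move: xy; rewrite e eqxx.
  + by move=> e; have [] := nF q; rewrite e eqxx.
  + by move=> e; move: xy; rewrite e eqxx.
- by case=> [p|[]] /=.
- move=> v; rewrite /vset !inE => /orP[/orP[/eqP->|/eqP->]|/imsetP[p _ ->]].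
  + by exists (inr false).
  + by exists (inr true).
  + by exists (inl p).
Qed.

Lemma mixedC (T : finType) (G : trigraph T) u u' w : mixed G u u' w = mixed G u' u w.
Proof. by rewrite /mixed [adj G u w || _]orbC [tblack G u w && _]andbC. Qed.

Lemma distinct_sub (T : finType) (H : trigraph {set T}) (U V : {set T}) :
  V \subset U -> distinct_parts H U -> distinct_parts H V.
Proof. by move=> sVU dp P w1 w2 HP h1 h2; apply: dp HP (subsetP sVU _ h1) (subsetP sVU _ h2). Qed.

Lemma involvesC (T : finType) (p : {set T} * {set T}) v v' : involves p v v' = involves p v' v.
Proof. by rewrite /involves orbC; congr (_ || _); rewrite andbC. Qed.

Lemma fence_lemma (T : finType) (G : trigraph T) x y f s k u u' :
  wf_trigraph G -> partial_seq 4 G s -> vertical G x y f -> k < size s ->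
  distinct_parts (trig_after G s k) (vset x y f) ->
  u \in vset x y f -> u' \in vset x y f -> involves (nthc s k) u u' ->
  ~~ involves (nthc s k) x y -> False.
Proof.
move=> wf ps vert ks dp.
have [HA HB AB] := ps.1 k ks.
have [cov uni blk adjI] := inv_after wf ps (ltnW ks).
suff main : forall u u', u \in vset x y f -> u' \in vset x y f ->
    u \in (nthc s k).1 -> u' \in (nthc s k).2 -> ~~ involves (nthc s k) x y -> False.
  move=> hu hu' /orP[/andP[a b]|/andP[a b]]; [exact: main hu hu' a b | exact: main hu' hu b a].
move=> {}u {}u' hu hu' uA uB nxy.
have [lb lr linj lG lv] := lab_facts wf vert.
have [l1 e1] := lv u hu; have [l2 e2] := lv u' hu'.
set bx := tblack G x y; set rx := tred G x y.
have n12 : ~~ leqb l1 l2.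
  rewrite leqbE; apply/eqP => e.
  have uu : u = u' by rewrite e1 e2 e.
  by move: AB; rewrite (uni _ _ u HA HB uA) ?eqxx // uu.
have nS : ~~ (isS l1 && isS l2).
  move: n12 nxy e1 e2 uA uB; case: l1 => [p|[]]; case: l2 => [q|[]] //= _.
  - by move=> /negP nxy -> -> a b; case: nxy; rewrite /involves a b orbT.
  - by move=> /negP nxy -> -> a b; case: nxy; rewrite /involves a b.
have := comb bx rx; move=> /allP /(_ l1 (allL_all l1)) /allP /(_ l2 (allL_all l2)).
rewrite n12 nS /= => c5.
set sq := map (lab x y f) (filter (goodP bx rx l1 l2) allL).
have usq : uniq sq by rewrite map_inj_uniq // filter_uniq // uniq_allL.
have cW : #|[set w in sq]| = count (goodP bx rx l1 l2) allL.
  by rewrite cardsE (card_uniqP usq) size_map size_filter.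
have : #|[set w in sq]| <= 4.
  apply: (red_bound wf ps ks uA uB).
  - by apply/subsetP => w; rewrite inE => /mapP[l _ ->].
  - apply: distinct_sub dp; apply/subsetP => w; rewrite inE => /mapP[l _ ->].
    by rewrite /vset !inE; case: l => [p|[]] /=; rewrite ?eqxx ?orbT // imset_f ?orbT.
  - move=> w; rewrite inE => /mapP[l]; rewrite mem_filter => /andP[/andP[/andP[n1 n2] mx] _] ->.
    have lvs : forall l0, lab x y f l0 \in vset x y f.
      by move=> l0; rewrite /vset !inE; case: l0 => [p|[]] /=; rewrite ?eqxx ?orbT // imset_f ?orbT.
    apply/and3P; split.
    + apply/negP => wA; move: n1; rewrite leqbE.
      by have := dp _ _ _ HA (lvs l) hu wA uA; rewrite e1 => /linj ->; rewrite eqxx.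
    + apply/negP => wB; move: n2; rewrite leqbE.
      by have := dp _ _ _ HB (lvs l) hu' wB uB; rewrite e2 => /linj ->; rewrite eqxx.
    + by rewrite e1 e2 /mixed /adj !lb !lr.
by rewrite cW leqNgt c5.
Qed.

Lemma le1_part (T : finType) (H : trigraph {set T}) (U P : {set T}) :
  distinct_parts H U -> P \in tver H -> #|U :&: P| <= 1.
Proof.
move=> dp HP; apply/card_le1_eqP => a b; rewrite !inE => /andP[ha aP] /andP[hb bP].
exact: (dp P b a HP hb ha bP aP).
Qed.

Lemma arc_lemma (T : finType) (G : trigraph T) x y f x' y' s k :
  wf_trigraph G -> partial_seq 4 G s -> vertical G x y f ->
  vs_arc G (vset x y f) x' y' -> k < size s ->
  distinct_parts (trig_after G s k) (vset x y f) ->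
  involves (nthc s k) x' y' -> False.
Proof.
move=> wf ps vert [blkA nadj] ks dp.
have [HA HB AB] := ps.1 k ks.
have mxw : forall w, w \in vset x y f -> mixed G x' y' w.
  move=> w hw; rewrite /mixed /adj blkA //=.
  by move: (nadj w hw); rewrite /adj negb_or => /andP[/negbTE -> _].
suff main : forall u u', u \in (nthc s k).1 -> u' \in (nthc s k).2 ->
    (forall w, w \in vset x y f -> mixed G u u' w) -> False.
  move=> /orP[/andP[a b]|/andP[a b]]; [apply: main a b _ | apply: main b a _] => // w hw.
  by rewrite mixedC; apply: mxw.
move=> u u' uA uB mx.
have [lb lr linj lG lv] := lab_facts wf vert.
have lvs : forall l0, lab x y f l0 \in vset x y f.
  by move=> l0; rewrite /vset !inE; case: l0 => [p|[]] /=; rewrite ?eqxx ?orbT // imset_f ?orbT.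
set A := (nthc s k).1 in uA HA AB; set B := (nthc s k).2 in uB HB AB.
set U := vset x y f in dp mx lvs.
have : #|U :\: (A :|: B)| <= 4.
  apply: (red_bound wf ps ks uA uB).
  - apply/subsetP => w; rewrite inE => /andP[_ /lv[l ->]]; exact: lG.
  - by apply: distinct_sub dp; apply: subsetDl.
  - move=> w; rewrite in_setD in_setU negb_or => /andP[/andP[nA nB] hw]; apply/and3P; split => //; exact: mx.
have c14 : 14 <= #|U|.
  have usq : uniq (map (lab x y f) allL) by rewrite map_inj_uniq // uniq_allL.
  rewrite -{1}size_allL -(size_map (lab x y f)) -(card_uniqP usq) -cardsE.
  by apply: subset_leq_card; apply/subsetP => w; rewrite inE => /mapP[l _ ->].
have c2 : #|U :&: (A :|: B)| <= 2.
  rewrite setIUr; apply: leq_trans (leq_card_setU _ _) _.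
  by rewrite -[2]/(1 + 1) leq_add // (le1_part dp).
rewrite cardsD leqNgt; move/negP; apply.
by apply: leq_trans (leq_sub2l _ c2) ; rewrite ltn_subRL; apply: leq_trans c14.
Qed.

Theorem lemma4p11 (T : finType) (G : trigraph T) (x y x' y' : T)
    (f f' : bool * 'I_6 -> T) :
  wf_trigraph G ->
  vertical G x y f -> vertical G x' y' f' ->
  [disjoint vset x y f & vset x' y' f'] ->
  vs_arc G (vset x y f) x' y' ->
  attachment_rule G f [set x; y] -> attachment_rule G f' [set x'; y'] ->
  forall s : seq ({set T} * {set T}), partial_seq 4 G s ->
  forall i, i < size s ->
  (exists v v', [/\ v \in vset x' y' f', v' \in vset x' y' f' & involves (nthc s i) v v']) ->
  exists2 k, k <= i & involves (nthc s k) x y.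
Proof.
move=> wf vert vert' _ arc _ _ s ps i iS [v [v' [hv hv' hi]]].
case: (boolP [exists k : 'I_i.+1, involves (nthc s k) x y]) => [/existsP[k hk]|none].
  by exists k => //; rewrite -ltnS.
exfalso.
have nxy : forall k, k <= i -> ~~ involves (nthc s k) x y.
  move=> k ki; apply/negP => h; move/negP: none; apply; apply/existsP.
  by exists (Ordinal (ki : k < i.+1)).
set U := vset x y f; set U' := vset x' y' f'.
pose bad (W : {set T}) j := [exists v, exists v', [&& v \in W, v' \in W & involves (nthc s j) v v']].
have nbad : forall (W : {set T}) k, (forall j, j < k -> ~~ bad W j) ->
    forall j v v', j < k -> v \in W -> v' \in W -> ~~ involves (nthc s j) v v'.
  move=> W k h j u u' jk hu hu'; apply/negP => hh; move/negP: (h j jk); apply.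
  by apply/existsP; exists u; apply/existsP; exists u'; rewrite hu hu' hh.
have ex' : exists j, bad U' j.
  by exists i; apply/existsP; exists v; apply/existsP; exists v'; rewrite hv hv' hi.
case: (ex_minnP ex') => i0 hb0 min0.
have i0i : i0 <= i by apply: min0; case: ex' => j _; apply/existsP; exists v; apply/existsP; exists v'; rewrite hv hv' hi.
have i0s : i0 < size s by apply: leq_ltn_trans iS.
case: (boolP [exists j : 'I_i0.+1, bad U j]) => [/existsP[j hj]| nob].
  have ex : exists j, bad U j by exists j.
  case: (ex_minnP ex) => i1 hb1 min1.
  have i1i0 : i1 <= i0 by apply: leq_trans (min1 _ hj) _; rewrite -ltnS.
  have i1s : i1 < size s by apply: leq_ltn_trans i0s.
  have dp : distinct_parts (trig_after G s i1) U.
    apply: (distinct_after wf ps (ltnW i1s)); apply: nbad => j0 j0l.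
    by apply/negP => /min1; rewrite leqNgt j0l.
  move/existsP: hb1 => [u /existsP[u' /and3P[hu hu' hinv]]].
  exact: (fence_lemma wf ps vert i1s dp hu hu' hinv (nxy i1 (leq_trans i1i0 i0i))).
have dp : distinct_parts (trig_after G s i0) U.
  apply: (distinct_after wf ps (ltnW i0s)); apply: nbad => j0 j0l.
  apply/negP => hb; move/negP: nob; apply; apply/existsP.
  by exists (Ordinal (ltnW j0l : j0 < i0.+1)).
have dp' : distinct_parts (trig_after G s i0) U'.
  apply: (distinct_after wf ps (ltnW i0s)); apply: nbad => j0 j0l.
  by apply/negP => /min0; rewrite leqNgt j0l.
move/existsP: hb0 => [u /existsP[u' /and3P[hu hu' hinv]]].
case: (boolP (involves (nthc s i0) x' y')) => hxy.
  exact: (arc_lemma wf ps vert arc i0s dp hxy).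
exact: (fence_lemma wf ps vert' i0s dp' hu hu' hinv hxy).
Qed.
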